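(* There is no non-trivial quotient $Q$ of the identity functor on the category of abelian groups such that $Q(A)$ is divisible for every abelian group $A$.
   Context: A quotient of the identity functor on abelian groups is a functor $Q$ with a natural transformation $q:\mathrm{Id}\to Q$ such that each $q_A:A\to Q(A)$ is surjective; it is non-trivial if $Q(A)\neq 0$ for some $A$. *)

(* Defs.v *)
From HB Require Import structures.
From mathcomp Require Import all_boot all_order all_algebra.
Set Implicit Arguments. Unset Strict Implicit. Unset Printing Implicit Defensive.
Import GRing.Theory.
Local Open Scope ring_scope.

(* A quotient of the identity functor on abelian groups: an endofunctor Q of
   Ab together with a natural transformation q : Id -> Q whose components are
   surjective. *)
Record id_quotient := IdQuotient {
  Qobj : zmodType -> zmodType;
  Qmap : forall (A B : zmodType), {additive A -> B} -> {additive Qobj A -> Qobj B};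
  Qmap_id : forall (A : zmodType) (x : Qobj A),
      Qmap (idfun : {additive A -> A}) x = x;
  Qmap_comp : forall (A B C : zmodType) (f : {additive A -> B})
      (g : {additive B -> C}) (x : Qobj A),
      Qmap (g \o f : {additive A -> C}) x = Qmap g (Qmap f x);
  qnat : forall (A : zmodType), {additive A -> Qobj A};
  qnat_natural : forall (A B : zmodType) (f : {additive A -> B}) (x : A),
      Qmap f (qnat A x) = qnat B (f x);
  qnat_surj : forall (A : zmodType) (y : Qobj A), exists x : A, qnat A x = y
}.

Definition id_quotient_nontrivial (Q : id_quotient) : Prop :=
  exists (A : zmodType) (y : Qobj Q A), y != 0.

Definition divisible_group (D : zmodType) : Prop :=
  forall (n : nat), (0 < n)%N -> forall y : D, exists x : D, x *+ n = y.

(* Main.v *)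
Require Import Defs.
From HB Require Import structures.
From mathcomp Require Import all_boot all_order all_algebra.
From mathcomp Require Import zify.
Import GRing.Theory Num.Theory.
Local Open Scope ring_scope.

Lemma gen_form (Q : id_quotient) (y : Qobj Q int) :
  exists k : int, y = qnat Q int 1 *~ k.
Proof.
have [k <-] := qnat_surj y.
by exists k; rewrite -raddfMz intz.
Qed.

Theorem corollary3p20 :
  ~ (exists Q : id_quotient,
        id_quotient_nontrivial Q /\ forall A : zmodType, divisible_group (Qobj Q A)).
Proof.
move=> [Q [[A [y Hy]] Hdiv]].
set g := qnat Q int 1.
have g0 : g = 0.
  have [x Hx] := Hdiv int 2%N isT g.
  have [k0 Hk0] := gen_form Q x.
  have HN : g *~ (2 * k0 - 1) = 0.
    by rewrite mulrzBr mulrC mulrzA -Hk0 mulrz_nat -Hx subrr.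
  have gN : g *+ absz (2 * k0 - 1)%R = 0.
    move: HN; case: (2 * k0 - 1) => n //= /eqP; by rewrite oppr_eq0 => /eqP.
  set N := absz (2 * k0 - 1)%R.
  have Npos : (0 < N)%N by rewrite /N absz_gt0; lia.
  have [x' Hx'] := Hdiv int N Npos g.
  have [k1 Hk1] := gen_form Q x'.
  by rewrite -Hx' Hk1 -mulrz_nat mulrzAC mulrz_nat gN mul0rz.
move: Hy; have [a <-] := qnat_surj y.
have -> : a = ( *~%R a : {additive int -> A}) 1 by rewrite /= mulr1z.
by rewrite -qnat_natural -/g g0 raddf0 eqxx.
Qed.
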